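(* Let $c,h,\alpha,\beta\in\mathbb{C}$ and $l,\gamma\in\mathbb{C}^*$. (a) For every $k\in\frac12\mathbb{Z}$, $\mathbf{1}\otimes v_k\notin U(\mathcal{D})(\mathbf{1}\otimes v_{k+\frac12})$ in $M(c,h,l)\otimes A(\alpha,\beta,\gamma)$. (b) The $\mathcal{D}$-module $M(c,h,l)\otimes A(\alpha,\beta,\gamma)$ is not irreducible.
   Context: The mirror-twisted Heisenberg–Virasoro algebra $\mathcal{D}$ is the complex Lie algebra with basis $\{d_m,h_r,\mathbf{c},\mathbf{l}: m\in\mathbb{Z}, r\in\frac12+\mathbb{Z}\}$ and brackets $[d_m,d_n]=(m-n)d_{m+n}+\frac{m^3-m}{12}\delta_{m+n,0}\mathbf{c}$, $[d_m,h_r]=-rh_{m+r}$, $[h_r,h_s]=r\delta_{r+s,0}\mathbf{l}$, with $\mathbf{c},\mathbf{l}$ central. $\mathcal{D}^{+}=\mathrm{span}\{d_{n},h_{r}: n\in\mathbb{N}, r\in\frac12+\mathbb{Z}_{\ge0}\}$, $\mathcal{D}^0=\mathrm{span}\{d_0,\mathbf{c},\mathbf{l}\}$. The Verma module is $M(c,h,l)=U(\mathcal{D})\otimes_{U(\mathcal{D}^0\oplus\mathcal{D}^+)}\mathbb{C}\mathbf{1}$ with $d_0\mathbf{1}=h\mathbf{1}$, $\mathbf{c}\mathbf{1}=c\mathbf{1}$, $\mathbf{l}\mathbf{1}=l\mathbf{1}$, $\mathcal{D}^+\mathbf{1}=0$. $A(\alpha,\beta,\gamma)$ is the $\mathcal{D}$-module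 with basis $\{v_k:k\in\frac12\mathbb{Z}\}$ and $d_mv_k=(\alpha+\beta m-k)v_{m+k}$, $h_rv_n=v_{n+r}$ for $n\in\mathbb{Z}$, $h_rv_s=\gamma v_{r+s}$ for $s\in\frac12+\mathbb{Z}$, $\mathbf{c},\mathbf{l}$ acting as $0$. Tensor products carry the action $x(v\otimes w)=xv\otimes w+v\otimes xw$. *)

(* Defs.v *)
From HB Require Import structures.
From mathcomp Require Import all_boot all_order all_algebra.
From mathcomp Require Import complex.
From mathcomp Require Import reals.
Set Implicit Arguments. Unset Strict Implicit. Unset Printing Implicit Defensive.
Import Order.TTheory GRing.Theory Num.Theory.
Local Open Scope ring_scope.

(* Basis of the mirror-twisted Heisenberg-Virasoro algebra D:
     d_m (m : int), h_{j + 1/2} (j : int), c, l.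
   A D-module is given by the action of the basis elements on a K-vector space. *)
Section DModules.
Variable K : fieldType.

Record Drep (V : lmodType K) := DRep {
  dop : int -> V -> V;
  hop : int -> V -> V;          (* hop j = h_{j+1/2} *)
  cop : V -> V;
  lop : V -> V
}.

Definition is_lin (V W : lmodType K) (f : V -> W) :=
  forall (a : K) (u v : V), f (a *: u + v) = a *: f u + f v.

Definition is_Dmodule (V : lmodType K) (r : Drep V) : Prop :=
  [/\ (forall m, is_lin (dop r m)), (forall j, is_lin (hop r j)),
      is_lin (cop r), is_lin (lop r) &
  [/\ [/\
      (forall (m n : int) v,
         dop r m (dop r n v) - dop r n (dop r m v) =
         (m - n)%:~R *: dop r (m + n) v
         + (if m + n == 0 then ((m ^+ 3 - m)%:~R / 12%:R) *: cop r v else 0)),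
      (forall (m j : int) v,
         dop r m (hop r j v) - hop r j (dop r m v) =
         - ((2 * j + 1)%:~R / 2%:R) *: hop r (m + j) v) &
      (forall (i j : int) v,
         hop r i (hop r j v) - hop r j (hop r i v) =
         (if i + j + 1 == 0 then ((2 * i + 1)%:~R / 2%:R) *: lop r v else 0))],
      (forall m v, cop r (dop r m v) = dop r m (cop r v)
                /\ lop r (dop r m v) = dop r m (lop r v)),
      (forall j v, cop r (hop r j v) = hop r j (cop r v)
                /\ lop r (hop r j v) = hop r j (lop r v)) &
      (forall v, cop r (lop r v) = lop r (cop r v))]].

Definition is_Dhom (V W : lmodType K) (r : Drep V) (s : Drep W) (f : V -> W) :=
  [/\ is_lin f,
      (forall m v, f (dop r m v) = dop s m (f v)),
      (forall j v, f (hop r j v) = hop s j (f v)),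
      (forall v, f (cop r v) = cop s (f v)) &
      (forall v, f (lop r v) = lop s (f v))].

Definition is_hw (c h l : K) (V : lmodType K) (r : Drep V) (w : V) :=
  [/\ dop r 0 w = h *: w, cop r w = c *: w, lop r w = l *: w,
      (forall m : int, 0 < m -> dop r m w = 0) &
      (forall j : int, 0 <= j -> hop r j w = 0)].

(* The Verma module M(c,h,l) = U(D) (x)_{U(D^0 + D^+)} C1, characterised by
   its defining universal property (induced module). *)
Definition is_Verma (c h l : K) (M : lmodType K) (r : Drep M) (one : M) :=
  [/\ is_Dmodule r, is_hw c h l r one &
      forall (N : lmodType K) (s : Drep N) (w : N),
        is_Dmodule s -> is_hw c h l s w ->
        exists! f : M -> N, is_Dhom r s f /\ f one = w].

(* A has basis v_k, k in 1/2 Z;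
   we index v_k by the integer n = 2k.  Since {v_k} is a basis of A,
   M (x) A = (+)_k M (x) v_k, and an element sum_k u_k (x) v_k is encoded as
   a finitely supported function f : int -> M, f n = u_{n/2}.  The action
   x (u (x) v) = x u (x) v + u (x) x v gives the operators below. *)
Section Tensor.
Variables (alpha beta gamma : K) (M : lmodType K) (r : Drep M).

Definition fsupp (f : int -> M) := exists s : seq int, forall n, n \notin s -> f n = 0.

(* d_m v_k = (alpha + beta m - k) v_{m+k} *)
Definition tD (m : int) (f : int -> M) : int -> M := fun n =>
  dop r m (f n) + (alpha + beta * m%:~R - (n - 2 * m)%:~R / 2%:R) *: f (n - 2 * m).

(* h_r v_k = v_{k+r} for k in Z, = gamma v_{k+r} for k in 1/2 + Z; r = j + 1/2 *)
Definition tH (j : int) (f : int -> M) : int -> M := fun n =>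
  hop r j (f n)
  + (if (2 %| (n - (2 * j + 1)))%Z then 1 else gamma) *: f (n - (2 * j + 1)).

(* c and l act as 0 on A *)
Definition tC (f : int -> M) : int -> M := fun n => cop r (f n).
Definition tL (f : int -> M) : int -> M := fun n => lop r (f n).

Definition tsubmod (S : (int -> M) -> Prop) :=
  [/\ (forall f, S f -> fsupp f), S (fun _ => 0) &
      (forall a f g, S f -> S g -> S (fun n => a *: f n + g n))] /\
  [/\ (forall m f, S f -> S (tD m f)),
      (forall j f, S f -> S (tH j f)) &
      (forall f, S f -> S (tC f) /\ S (tL f))].

Definition in_gen (w f : int -> M) :=
  forall S, tsubmod S -> S w -> S f.

Definition t_irreducible :=
  (exists f, fsupp f /\ exists n, f n <> 0) /\
  forall S, tsubmod S ->
    (forall f, S f -> forall n, f n = 0) \/ (forall f, fsupp f -> S f).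

End Tensor.

Definition tvec (M : lmodType K) (u : M) (n : int) : int -> M :=
  fun n' => if n' == n then u else 0.

End DModules.

(* Main.v *)
Require Import Defs.
From HB Require Import structures.
From mathcomp Require Import all_boot all_order all_algebra.
From mathcomp Require Import complex.
From mathcomp Require Import reals.
From mathcomp Require Import finmap.
From mathcomp.multinomials Require Import monalg.
From mathcomp Require Import ring lra zify.
From Stdlib Require Import FunctionalExtensionality.
Import Order.TTheory GRing.Theory Num.Theory.
Set Implicit Arguments. Unset Strict Implicit. Unset Printing Implicit Defensive.
Local Open Scope ring_scope.
Section Scal.
Variable K : numFieldType.
Variables c0 l0 : K.
Definition ev (p : int) : bool := (2 %| p)%Z.
Definition gam (p q : int) : K :=
  ((if ev q then p else 0) - (if ev p then q else 0))%:~R / 2%:R.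
Definition cent (p q : int) : K :=
  if p + q == 0 then
    (if ev p then (((p%:~R / 2%:R) ^+ 3 - p%:~R / 2%:R) / 12%:R) * c0
     else (p%:~R / 2%:R) * l0)
  else 0.
Lemma evD a b : ev (a + b) = (ev a == ev b).
Proof. rewrite /ev; case: (boolP (2 %| a)%Z); case: (boolP (2 %| b)%Z) => /= ? ?; lia. Qed.
Lemma evN a : ev (- a) = ev a.
Proof. rewrite /ev; case: (boolP (2 %| a)%Z) => /= ?; lia. Qed.
Lemma gamC p q : gam p q = - gam q p.
Proof. by rewrite /gam -mulNr -rmorphN opprB. Qed.
Lemma gam_jacobi a b e :
  gam a b * gam (a + b) e + gam b e * gam (b + e) a + gam e a * gam (e + a) b = 0.
Proof.
rewrite /gam !evD.
case: (ev a); case: (ev b); case: (ev e) => /=; rewrite ?rmorphB ?rmorphD ?rmorph0; field; by [].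
Qed.
Lemma cent_cocycle a b e :
  gam a b * cent (a + b) e + gam b e * cent (b + e) a + gam e a * cent (e + a) b = 0.
Proof.
rewrite /cent.
have -> : b + e + a = a + b + e by ring.
have -> : e + a + b = a + b + e by ring.
case: eqP => [h|]; last by rewrite !mulr0 !addr0.
have -> : e = - (a + b) by apply/eqP; rewrite -subr_eq0 opprK addrC; apply/eqP.
rewrite /gam !evD !evN !evD.
case: (ev a); case: (ev b) => /=; rewrite ?rmorphB ?rmorphD ?rmorphN ?rmorph0; field; by [].
Qed.
Lemma gam_jac2 (a b e : int) :
  gam a e * gam (a + e) b + gam b e * gam a (b + e) = gam a b * gam (a + b) e.
Proof.
rewrite /gam !evD.
case: (ev a); case: (ev b); case: (ev e) => /=; rewrite ?rmorphB ?rmorphD ?rmorph0; field; by [].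
Qed.
Lemma gam_nn (p : int) : gam p p = 0.
Proof. by rewrite /gam subrr mul0r. Qed.
End Scal.
Section Scal2.
Variable K : numFieldType.
Variables c0 l0 : K.
Local Notation gam := (@gam K).
Local Notation cent := (cent c0 l0).
Lemma jacA (a b e : int) :
  - gam a b * gam (a + b) e + gam a e * gam (a + e) b + gam b e * gam a (b + e) = 0.
Proof.
rewrite /gam !evD.
case: (ev a); case: (ev b); case: (ev e) => /=; rewrite ?rmorphB ?rmorphD ?rmorph0; field; by [].
Qed.
Lemma cocA (a b e : int) :
  - gam a b * cent (a + b) e + gam a e * cent (a + e) b + gam b e * cent a (b + e) = 0.
Proof.
rewrite /cent.
have -> : a + e + b = a + b + e by ring.
have -> : a + (b + e) = a + b + e by ring.
case: eqP => [h|]; last by rewrite !mulr0 !addr0.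
have -> : e = - (a + b) by apply/eqP; rewrite -subr_eq0 opprK addrC; apply/eqP.
have -> : a + - (a + b) = - b by ring.
rewrite /gam !evD !evN !evD.
case: (ev a); case: (ev b) => /=; rewrite ?rmorphB ?rmorphD ?rmorphN ?rmorph0; field; by [].
Qed.
Lemma cent0 (p q : int) : p + q != 0 -> cent p q = 0.
Proof. by rewrite /cent => /negbTE ->. Qed.
Lemma cent00 : cent 0 0 = 0.
Proof. by rewrite /cent addr0 eqxx /ev dvdz0 mul0r expr0n /= subrr !mul0r. Qed.
End Scal2.
Section Scal3.
Variable K : numFieldType.
Variables c0 l0 : K.
Lemma centC (p q : int) : cent c0 l0 p q = - cent c0 l0 q p.
Proof.
rewrite /cent [q + p]addrC; case: (boolP (p + q == 0)) => h; last by rewrite oppr0.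
have -> : q = - p by apply/eqP; rewrite -subr_eq0 opprK addrC.
rewrite evN; case: (ev p); rewrite ?rmorphN; field; by [].
Qed.
End Scal3.
Section ScalA.
Variable K : numFieldType.
Variables alpha beta gamma : K.
Definition aZ (s t : int) : K :=
  if ev s then alpha + beta * (s%:~R / 2%:R) - t%:~R / 2%:R else (if ev t then 1 else gamma).
Lemma aZ_rel (s t u : int) :
  aZ s (u + t) * aZ t u - aZ t (u + s) * aZ s u = gam K s t * aZ (s + t) u.
Proof.
rewrite /aZ /gam !evD.
case: (ev s); case: (ev t); case: (ev u) => /=; rewrite ?rmorphB ?rmorphD ?rmorph0; field; by [].
Qed.
End ScalA.
Definition valid (m : seq nat) : bool := sorted leq m && all (fun y => 0 < y)%N m.
Definition nz m := if valid m then m else [::].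
Definition lb (b : nat) (m : seq nat) := all (fun z => b <= z)%N m.
Lemma valid_cons y1 k : valid (y1 :: k) = [&& (0 < y1)%N, lb y1 k & valid k].
Proof.
rewrite /valid /= (path_sortedE leq_trans) /lb.
by case: (0 < y1)%N; case: (all _ k); case: (sorted _ k); case: (all _ k).
Qed.
Lemma valid_tail y1 k : valid (y1 :: k) -> valid k.
Proof. by rewrite valid_cons => /and3P []. Qed.
Lemma valid_lb y1 k : valid (y1 :: k) -> lb y1 k.
Proof. by rewrite valid_cons => /and3P []. Qed.
Lemma valid_pos y1 k : valid (y1 :: k) -> (0 < y1)%N.
Proof. by rewrite valid_cons => /and3P []. Qed.
Lemma nz_valid m : valid m -> nz m = m.
Proof. by rewrite /nz => ->. Qed.
Lemma valid_nz m : valid (nz m).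
Proof. by rewrite /nz; case: ifP. Qed.
Lemma valid_nil : valid [::].
Proof. by []. Qed.
Lemma lb_trans a b m : (a <= b)%N -> lb b m -> lb a m.
Proof. by move=> ab; apply: sub_all => z; apply: leq_trans. Qed.
Lemma lb0 m : lb 0 m.
Proof. by apply/allP. Qed.
Lemma lb_cons b y1 r : lb b (y1 :: r) = (b <= y1)%N && lb b r.
Proof. by []. Qed.
Lemma sum_indep (R : zmodType) (F : int -> R) (L1 L2 : seq int) :
  uniq L1 -> uniq L2 -> (forall n, n \notin L1 -> F n = 0) ->
  (forall n, n \notin L2 -> F n = 0) -> \sum_(n <- L1) F n = \sum_(n <- L2) F n.
Proof.
move=> u1 u2 h1 h2.
have -> : \sum_(n <- L1) F n = \sum_(n <- L1 | n \in L2) F n.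
  rewrite [RHS]big_mkcond; apply: eq_bigr => n _; case: ifP => // /negbT /h2 -> //.
have -> : \sum_(n <- L2) F n = \sum_(n <- L2 | n \in L1) F n.
  rewrite [RHS]big_mkcond; apply: eq_bigr => n _; case: ifP => // /negbT /h1 -> //.
rewrite -[LHS]big_filter -[RHS]big_filter; apply: perm_big; apply: uniq_perm; rewrite ?filter_uniq //.
by move=> n; rewrite !mem_filter andbC.
Qed.
Section Abstract.
Variable K : numFieldType.
Variable E : lmodType K.
Variable mono : seq nat -> E.
Variable ext : (seq nat -> E) -> E -> E.
Variable cf : seq nat -> E -> K.
Hypothesis ext_lin : forall F, linear (ext F).
Hypothesis ext_mono : forall F k, ext F (mono k) = F k.
Hypothesis ext_eq : forall F G X, (forall k, cf k X != 0 -> F k = G k) -> ext F X = ext G X.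
Hypothesis ext_FD : forall F G X, ext (fun k => F k + G k) X = ext F X + ext G X.
Hypothesis ext_FZ : forall a F X, ext (fun k => a *: F k) X = a *: ext F X.
Hypothesis ext_comp : forall F G X, ext G (ext F X) = ext (fun k => ext G (F k)) X.
Hypothesis ext_id : forall X, ext mono X = X.
Hypothesis cf_lin : forall k, linear (cf k : E -> K^o).
Hypothesis cf_mono : forall k m, cf k (mono m) = (k == m)%:R.
Hypothesis cfP : forall x y, (forall k, cf k x = cf k y) -> x = y.
Hypothesis cf_ext_supp : forall F X k, cf k (ext F X) != 0 ->
  exists2 m, cf m X != 0 & cf k (F m) != 0.
Variables c0 h0 l0 : K.
Local Notation gam := (@gam K).
Local Notation cent := (cent c0 l0).

HB.instance Definition _ F := GRing.isLinear.Build K E E *:%R (ext F) (ext_lin F).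
HB.instance Definition _ k := GRing.isLinear.Build K E K^o *:%R (cf k) (cf_lin k).

Lemma cfD k x y : cf k (x + y) = cf k x + cf k y. Proof. exact: linearD. Qed.
Lemma cfZ k a x : cf k (a *: x) = a * cf k x. Proof. exact: linearZ. Qed.
Lemma cfN k x : cf k (- x) = - cf k x. Proof. exact: linearN. Qed.
Lemma cfB k x y : cf k (x - y) = cf k x - cf k y. Proof. exact: linearB. Qed.
Lemma cf0 k : cf k 0 = 0. Proof. exact: linear0. Qed.
Lemma ext_FB F G X : ext (fun k => F k - G k) X = ext F X - ext G X.
Proof.
rewrite -scaleN1r -ext_FZ -ext_FD; apply: ext_eq => k _.
by rewrite scaleN1r.
Qed.

Definition CONS (y1 : nat) (X : E) : E := ext (fun k => mono (y1 :: k)) X.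
Fixpoint ins (y : nat) (m : seq nat) {struct m} : E :=
  match m with
  | [::] => mono [:: y]
  | y1 :: r => if (y <= y1)%N then mono (y :: y1 :: r)
               else CONS y1 (ins y r) + gam (- y%:Z) (- y1%:Z) *: ins (y + y1) r
  end.
Definition insV (y : nat) (X : E) : E := ext (fun k => ins y (nz k)) X.
Fixpoint act_b (m : seq nat) (p : nat) {struct m} : E :=
  match m with
  | [::] => (if p == 0%N then h0 else 0) *: mono [::]
  | y1 :: r => insV y1 (act_b r p)
      + gam p (- y1%:Z) *: (match (p%:Z - y1%:Z) with Posz n => act_b r n | Negz n => ins n.+1 r end)
      + cent p (- y1%:Z) *: mono r
  end.
Definition Zact (s : int) (m : seq nat) : E :=
  match s with Posz n => act_b m n | Negz n => ins n.+1 m end.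
Lemma act_b_cons y1 r p : act_b (y1 :: r) p =
  insV y1 (act_b r p) + gam p (- y1%:Z) *: Zact (p%:Z - y1%:Z) r + cent p (- y1%:Z) *: mono r.
Proof. by []. Qed.
Definition rhoZ (s : int) (X : E) : E := ext (fun k => Zact s (nz k)) X.
Definition Pn (X : E) : E := ext (fun k => mono (nz k)) X.

HB.instance Definition _ y1 := GRing.isLinear.Build K E E *:%R (CONS y1) (ext_lin _).
HB.instance Definition _ y := GRing.isLinear.Build K E E *:%R (insV y) (ext_lin _).
HB.instance Definition _ s := GRing.isLinear.Build K E E *:%R (rhoZ s) (ext_lin _).
HB.instance Definition _ := GRing.isLinear.Build K E E *:%R Pn (ext_lin _).

Implicit Types P Q : pred (seq nat).
Definition allv P (X : E) := forall k, cf k X != 0 -> P k.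
Lemma allv0 P : allv P 0.
Proof. by move=> k; rewrite cf0 eqxx. Qed.
Lemma allvZD P a X Y : allv P X -> allv P (Y) -> allv P (a *: X + Y).
Proof.
move=> hX hY k; rewrite cfD cfZ.
case: (boolP (cf k X == 0)) => [/eqP ->|/hX //]; rewrite mulr0 add0r; exact: hY.
Qed.
Lemma allvD P X Y : allv P X -> allv P Y -> allv P (X + Y).
Proof. by move=> hX hY; rewrite -[X]scale1r; apply: allvZD. Qed.
Lemma allvZ P a X : allv P X -> allv P (a *: X).
Proof. by move=> hX; rewrite -[_ *: _]addr0; apply: allvZD => //; apply: allv0. Qed.
Lemma allv_mono P k : P k -> allv P (mono k).
Proof. by move=> h k'; rewrite cf_mono pnatr_eq0 eqb0 negbK => /eqP ->. Qed.
Lemma allv_ext P F X : (forall k, cf k X != 0 -> allv P (F k)) -> allv P (ext F X).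
Proof. by move=> h k /cf_ext_supp [m /h hm /hm]. Qed.
Lemma allv_imp P Q X : (forall k, P k -> Q k) -> allv P X -> allv Q X.
Proof. by move=> h hX k /hX /h. Qed.

Lemma ins_le y k : lb y k -> ins y k = mono (y :: k).
Proof. by case: k => //= k1 k /andP [->]. Qed.
Lemma ins_gt y y1 k : (y1 < y)%N ->
  ins y (y1 :: k) = CONS y1 (ins y k) + gam (- y%:Z) (- y1%:Z) *: ins (y + y1) k.
Proof. by move=> lt; rewrite [LHS]/= leqNgt lt. Qed.

Lemma ins_LB m : valid m -> forall y b, (0 < y)%N -> (b <= y)%N -> lb b m ->
  allv (fun k => valid k && lb b k) (ins y m).
Proof.
elim: m => [|y1 r IH] vm y b y0 hb lbm /=.
  by apply: allv_mono; rewrite valid_cons y0 /= hb.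
have vr := valid_tail vm; have lbr := valid_lb vm; have y10 := valid_pos vm.
case: ifP => yy1.
  apply: allv_mono; rewrite valid_cons y0 /= yy1 /= hb /=.
  by move: lbm => /= /andP [-> ->]; rewrite (lb_trans yy1 lbr) vm.
move: lbm => /= /andP [hb1 lbr'].
apply: allvD; last first.
  apply: allvZ; apply: IH => //; first by rewrite addn_gt0 y0.
  by apply: (leq_trans hb); apply: leq_addr.
apply: allv_ext => k hk; apply: allv_mono.
have yy1' : (y1 <= y)%N by apply: ltnW; rewrite ltnNge yy1.
have /andP [vk lbk] := IH vr y y1 y0 yy1' lbr k hk.
have /andP [_ lbk'] := IH vr y b y0 hb lbr' k hk.
by rewrite valid_cons y10 lbk vk /= hb1 lbk'.
Qed.
Lemma ins_valid m y : valid m -> (0 < y)%N -> allv valid (ins y m).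
Proof.
move=> vm y0; apply: (allv_imp (P := fun k => valid k && lb 0 k)); first by move=> k /andP [].
by apply: ins_LB => //; apply: lb0.
Qed.
Lemma ins_deg m y : allv (fun k => sumn k == sumn m + y)%N (ins y m).
Proof.
elim: m y => [|y1 r IH] y /=; first by apply: allv_mono; rewrite /= addn0 add0n.
case: ifP => _; first by apply: allv_mono; rewrite /= addnC.
apply: allvD.
  apply: allv_ext => k /IH /eqP hk; apply: allv_mono; rewrite /= hk; apply/eqP; ring.
apply: allvZ; apply: allv_imp (IH (y + y1)%N) => k /eqP ->; apply/eqP; ring.
Qed.
Lemma insV_mono y m : valid m -> insV y (mono m) = ins y m.
Proof. by move=> h; rewrite /insV ext_mono nz_valid. Qed.
Lemma insV_valid y X : (0 < y)%N -> allv valid (insV y X).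
Proof. by move=> y0; apply: allv_ext => k _; apply: ins_valid => //; apply: valid_nz. Qed.
Lemma act_b_valid m p : valid m -> allv valid (act_b m p).
Proof.
elim: m p => [|y1 r IH] p vm /=; first by apply: allvZ; apply: allv_mono.
have vr := valid_tail vm; have y10 := valid_pos vm.
apply: allvD; [apply: allvD|].
- exact: insV_valid.
- apply: allvZ; case: (p%:Z - y1%:Z) => n; [exact: IH | exact: ins_valid].
- by apply: allvZ; apply: allv_mono.
Qed.
Lemma Zact_valid s m : valid m -> allv valid (Zact s m).
Proof. by case: s => n vm /=; [exact: act_b_valid | exact: ins_valid]. Qed.

Lemma insV_CONS_gt y y1 (X : E) : (y1 < y)%N -> allv (fun k => valid (y1 :: k)) X ->
  insV y (CONS y1 X) = CONS y1 (insV y X) + gam (- y%:Z) (- y1%:Z) *: insV (y + y1) X.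
Proof.
move=> lt hX.
rewrite /insV /CONS ext_comp [in RHS]ext_comp -ext_FZ -ext_FD.
apply: ext_eq => k hk; rewrite ext_mono (nz_valid (hX k hk)) ins_gt //.
by rewrite nz_valid //; exact: valid_tail (hX k hk).
Qed.
Lemma insV_CONS_le y (X : E) : allv (fun k => valid k && lb y k) X -> insV y X = CONS y X.
Proof.
move=> hX; apply: ext_eq => k /hX /andP [vk lbk]; rewrite nz_valid //; exact: ins_le.
Qed.

Ltac cfsimp := repeat match goal with
  | |- context [cf ?k (?x + ?y)] => rewrite (cfD k x y)
  | |- context [cf ?k (- ?x)] => rewrite (cfN k x)
  | |- context [cf ?k (?a *: ?x)] => rewrite (cfZ k a x)
  end.
Ltac close2 J C u v := apply/eqP; rewrite -subr_eq0; apply/eqP;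
  match type of J with ?A = 0 => match type of C with ?B = 0 =>
   transitivity (A * u + B * v); [ring | by rewrite J C !mul0r addr0] end end.

Definition stmtI (m : seq nat) := forall y y', (0 < y)%N -> (0 < y')%N ->
  insV y (ins y' m) - insV y' (ins y m) = gam (- y%:Z) (- y'%:Z) *: ins (y + y') m.

Lemma insI_lb m y y' : valid m -> (y' < y)%N -> (0 < y')%N -> lb y' m ->
  insV y (ins y' m) - insV y' (ins y m) = gam (- y%:Z) (- y'%:Z) *: ins (y + y') m.
Proof.
move=> vm lt y0 lbm.
have y0' : (0 < y)%N by apply: leq_ltn_trans lt.
rewrite (ins_le lbm) insV_mono; last by rewrite valid_cons y0 lbm vm.
rewrite ins_gt // (@insV_CONS_le y' (ins y m)); first by rewrite addrC addKr.
apply: ins_LB => //; exact: ltnW.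
Qed.

Lemma gam_jacI (y y' y1 : nat) :
  gam (- y%:Z) (- y1%:Z) * gam (- (y + y1)%N%:Z) (- y'%:Z)
  + gam (- y'%:Z) (- y1%:Z) * gam (- y%:Z) (- (y' + y1)%N%:Z)
  = gam (- y%:Z) (- y'%:Z) * gam (- (y + y')%N%:Z) (- y1%:Z).
Proof. rewrite !PoszD !opprD; exact: gam_jac2. Qed.

Lemma insI_step y1 r y y' : valid (y1 :: r) -> stmtI r -> (y1 < y')%N -> (y' < y)%N ->
  insV y (ins y' (y1 :: r)) - insV y' (ins y (y1 :: r))
  = gam (- y%:Z) (- y'%:Z) *: ins (y + y') (y1 :: r).
Proof.
move=> vm IH lt1 lt.
have vr := valid_tail vm; have lbr := valid_lb vm; have y10 := valid_pos vm.
have y'0 : (0 < y')%N by apply: leq_ltn_trans lt1.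
have y0 : (0 < y)%N by apply: leq_ltn_trans lt.
have hv : forall z, (y1 <= z)%N -> allv (fun k => valid (y1 :: k)) (ins z r).
  move=> z hz; apply: allv_imp (ins_LB vr (leq_trans y10 hz) hz lbr).
  by move=> k /andP [vk lk]; rewrite valid_cons y10 lk vk.
rewrite (ins_gt r lt1) (ins_gt r (ltn_trans lt1 lt)) (ins_gt r (ltn_addr y' (ltn_trans lt1 lt))).
rewrite !linearD !linearZ /=.
rewrite (insV_CONS_gt (ltn_trans lt1 lt) (hv _ (ltnW lt1))) (insV_CONS_gt lt1 (hv _ (ltnW (ltn_trans lt1 lt)))).
have IH1 := IH y y' y0 y'0.
have IH2 := IH (y + y1)%N y' (ltn_addr _ y0) y'0.
have IH3 := IH y (y' + y1)%N y0 (ltn_addr _ y'0).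
rewrite addnAC in IH2; rewrite addnA in IH3.
move: IH1 IH2 IH3.
move=> /eqP; rewrite subr_eq => /eqP ->.
move=> /eqP; rewrite subr_eq => /eqP ->.
move=> /eqP; rewrite subr_eq => /eqP ->.
have J := gam_jacI y y' y1.
rewrite !linearD !linearZ /=.
apply: cfP => k; cfsimp.
apply/eqP; rewrite -subr_eq0; apply/eqP.
set P := (X in X = _ * _) in J. set Q := (X in _ = X) in J.
transitivity ((P - Q) * cf k (ins (y + y' + y1) r)); last by rewrite J subrr mul0r.
rewrite /P /Q; ring.
Qed.

Lemma insI m : valid m -> stmtI m.
Proof.
elim: m => [|y1 r IH] vm y y' y0 y'0.
  case: (ltngtP y' y) => h.
  - by apply: insI_lb.
  - by rewrite -opprB insI_lb // gamC scaleNr opprK addnC.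
  - by rewrite h subrr gam_nn scale0r.
have IHr := IH (valid_tail vm).
have main : forall a b, (0 < b)%N -> (b < a)%N ->
    insV a (ins b (y1 :: r)) - insV b (ins a (y1 :: r)) = gam (- a%:Z) (- b%:Z) *: ins (a + b) (y1 :: r).
  move=> a b b0 ba; case: (leqP b y1) => hb.
    apply: insI_lb => //; rewrite /= hb /=; apply: lb_trans hb (valid_lb vm).
  exact: insI_step.
case: (ltngtP y' y) => h.
- exact: main.
- by rewrite -opprB main // gamC scaleNr opprK addnC.
- by rewrite h subrr gam_nn scale0r.
Qed.

Lemma insVD y (a b : E) : insV y (a + b) = insV y a + insV y b. Proof. exact: linearD. Qed.
Lemma insVZ y c (a : E) : insV y (c *: a) = c *: insV y a. Proof. exact: linearZ. Qed.
Lemma insVN y (a : E) : insV y (- a) = - insV y a. Proof. exact: linearN. Qed.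
Lemma rhoZD s (a b : E) : rhoZ s (a + b) = rhoZ s a + rhoZ s b. Proof. exact: linearD. Qed.
Lemma rhoZZ s c (a : E) : rhoZ s (c *: a) = c *: rhoZ s a. Proof. exact: linearZ. Qed.
Lemma rhoZN s (a : E) : rhoZ s (- a) = - rhoZ s a. Proof. exact: linearN. Qed.

Lemma insIV y y' X : (0 < y)%N -> (0 < y')%N ->
  insV y (insV y' X) - insV y' (insV y X) = gam (- y%:Z) (- y'%:Z) *: insV (y + y') X.
Proof.
move=> y0 y'0; rewrite {1 3}/insV !ext_comp -ext_FB /insV -ext_FZ.
apply: ext_eq => k _; exact: insI (valid_nz k) y y' y0 y'0.
Qed.

Lemma rhoZ_mono s m : valid m -> rhoZ s (mono m) = Zact s m.
Proof. by move=> vm; rewrite /rhoZ ext_mono nz_valid. Qed.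

Lemma rhoZ_CONS (p : nat) y1 X : allv (fun k => valid (y1 :: k)) X ->
  rhoZ p (CONS y1 X) = insV y1 (rhoZ p X) + gam p (- y1%:Z) *: rhoZ (p%:Z - y1%:Z) X
    + cent p (- y1%:Z) *: X.
Proof.
move=> hX.
have -> : cent p (- y1%:Z) *: X = cent p (- y1%:Z) *: ext mono X by rewrite ext_id.
rewrite {1}/rhoZ /CONS ext_comp {1}/insV {1}/rhoZ ext_comp /rhoZ.
rewrite -!ext_FZ -!ext_FD; apply: ext_eq => k hk.
have vk := hX k hk; have vk' := valid_tail vk.
by rewrite ext_mono !nz_valid.
Qed.

Lemma NegzD n y1 : Negz n - y1%:Z = Negz (n + y1).
Proof. by rewrite !NegzE -addSn PoszD opprD. Qed.

Lemma H_head s y1 r : valid (y1 :: r) ->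
  insV y1 (Zact s r) = Zact s (y1 :: r) - gam s (- y1%:Z) *: Zact (s - y1%:Z) r
    - cent s (- y1%:Z) *: mono r.
Proof.
move=> vm; case: s => n.
  have -> : Zact (Posz n) (y1 :: r) = act_b (y1 :: r) n by [].
  rewrite act_b_cons.
  apply: cfP => k; cfsimp; ring.
have vr := valid_tail vm; have y10 := valid_pos vm.
have I1 := insI vr (ltn0Sn n) y10.
rewrite (ins_le (valid_lb vm)) insV_mono // in I1.
have -> : Zact (Negz n) (y1 :: r) = ins n.+1 (y1 :: r) by [].
rewrite NegzD cent0; last by rewrite NegzE; lia.
have -> : Zact (Negz (n + y1)) r = ins (n + y1).+1 r by [].
move: I1; rewrite NegzE /= => /eqP; rewrite subr_eq => /eqP ->.
rewrite addSn; apply: cfP => k; cfsimp; ring.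
Qed.

Lemma negC n y r : valid r -> (0 < y)%N ->
  rhoZ (Negz n) (ins y r) - insV y (Zact (Negz n) r)
  = gam (Negz n) (- y%:Z) *: Zact (Negz n - y%:Z) r + cent (Negz n) (- y%:Z) *: mono r.
Proof.
move=> vr y0.
rewrite cent0; last by rewrite NegzE; lia.
rewrite NegzD /= scale0r addr0 -/(insV n.+1 _) (insI vr (ltn0Sn n) y0) NegzE addSn.
by [].
Qed.

Definition stmtII m := forall (p : nat) y, (0 < y)%N ->
  rhoZ p (ins y m) - insV y (Zact p m)
  = gam p (- y%:Z) *: Zact (p%:Z - y%:Z) m + cent p (- y%:Z) *: mono m.

Lemma stmtC r : valid r -> stmtII r -> forall (s : int) y, (0 < y)%N ->
  rhoZ s (ins y r) - insV y (Zact s r)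
  = gam s (- y%:Z) *: Zact (s - y%:Z) r + cent s (- y%:Z) *: mono r.
Proof. move=> vr IH [n|n] y y0; [exact: IH | exact: negC]. Qed.

Lemma II_lb m (p : nat) y : valid m -> (0 < y)%N -> lb y m ->
  rhoZ p (ins y m) - insV y (Zact p m)
  = gam p (- y%:Z) *: Zact (p%:Z - y%:Z) m + cent p (- y%:Z) *: mono m.
Proof.
move=> vm y0 lbm.
rewrite (ins_le lbm) rhoZ_mono; last by rewrite valid_cons y0 lbm vm.
have -> : Zact p (y :: m) = act_b (y :: m) p by [].
rewrite act_b_cons.
apply: cfP => k; cfsimp; ring.
Qed.

Lemma II_step y1 r (p : nat) y : valid (y1 :: r) -> stmtII r -> (y1 < y)%N ->
  rhoZ p (ins y (y1 :: r)) - insV y (Zact p (y1 :: r))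
  = gam p (- y%:Z) *: Zact (p%:Z - y%:Z) (y1 :: r) + cent p (- y%:Z) *: mono (y1 :: r).
Proof.
move=> vm IH lt.
have vr := valid_tail vm; have lbr := valid_lb vm; have y10 := valid_pos vm.
have y0 : (0 < y)%N by apply: leq_ltn_trans lt.
have hvX : allv (fun k => valid (y1 :: k)) (ins y r).
  apply: allv_imp (ins_LB vr y0 (ltnW lt) lbr).
  by move=> k /andP [vk lk]; rewrite valid_cons y10 lk vk.
have IHa := IH p y y0; move/eqP: IHa; rewrite subr_eq => /eqP IHa.
have Cb := stmtC vr IH (p%:Z - y1%:Z) y0; move/eqP: Cb; rewrite subr_eq => /eqP Cb.
have IHc := IH p (y + y1)%N (ltn_addr _ y0); move/eqP: IHc; rewrite subr_eq => /eqP IHc.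
have I1 := insIV (Zact p r) y10 y0; move/eqP: I1; rewrite subr_eq => /eqP I1.
have H1 := H_head (p%:Z - y%:Z) vm.
have M1 : insV y1 (mono r) = mono (y1 :: r) by rewrite insV_mono // ins_le.
have M2 : insV y (mono r) = ins y r by rewrite insV_mono.
rewrite (ins_gt r lt) rhoZD rhoZZ (rhoZ_CONS p hvX) IHa IHc Cb.
have -> : Zact p (y1 :: r) = act_b (y1 :: r) p by [].
rewrite act_b_cons.
have -> : act_b r p = Zact p r by [].
rewrite !insVD !insVZ I1 H1 M1 M2.
have e1 : p%:Z - y1%:Z - y%:Z = p%:Z - y%:Z - y1%:Z by ring.
have e2 : p%:Z - (y + y1)%N%:Z = p%:Z - y%:Z - y1%:Z by rewrite PoszD opprD addrA.
have e3 : - (y + y1)%N%:Z = - y%:Z - y1%:Z by rewrite PoszD opprD.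
rewrite e1 e2 e3 addnC (@gamC K (- y1%:Z)).
have J := @jacA K p (- y%:Z) (- y1%:Z).
have C := @cocA K c0 l0 p (- y%:Z) (- y1%:Z).
apply: cfP => k; cfsimp.
close2 J C (cf k (Zact (p%:Z - y%:Z - y1%:Z) r)) (cf k (mono r)).
Qed.

Lemma II m : valid m -> stmtII m.
Proof.
elim: m => [|y1 r IH] vm p y y0; first by apply: II_lb.
case: (leqP y y1) => h.
  apply: II_lb => //; rewrite /= h /=; apply: lb_trans h (valid_lb vm).
exact: II_step (IH (valid_tail vm)) h.
Qed.

Lemma IIC r : valid r -> forall (s : int) y, (0 < y)%N ->
  rhoZ s (ins y r) - insV y (Zact s r)
  = gam s (- y%:Z) *: Zact (s - y%:Z) r + cent s (- y%:Z) *: mono r.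
Proof. by move=> vr; apply: stmtC => //; apply: II. Qed.

Lemma Pn_valid X : allv valid X -> Pn X = X.
Proof. by move=> h; rewrite -[RHS]ext_id; apply: ext_eq => k /h /nz_valid ->. Qed.

Lemma IIV (s : int) y X : (0 < y)%N ->
  rhoZ s (insV y X) - insV y (rhoZ s X)
  = gam s (- y%:Z) *: rhoZ (s - y%:Z) X + cent s (- y%:Z) *: Pn X.
Proof.
move=> y0; rewrite /insV /rhoZ /Pn !ext_comp -ext_FB -!ext_FZ -ext_FD.
apply: ext_eq => k _; exact: IIC (valid_nz k) s y y0.
Qed.

Lemma IIV' (s : int) y X : (0 < y)%N ->
  rhoZ s (insV y X)
  = gam s (- y%:Z) *: rhoZ (s - y%:Z) X + cent s (- y%:Z) *: Pn X + insV y (rhoZ s X).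
Proof. by move=> y0; apply/eqP; rewrite -subr_eq; apply/eqP; apply: IIV. Qed.

Definition stmtIII m := forall p q : nat,
  rhoZ p (Zact q m) - rhoZ q (Zact p m) = gam p q *: Zact (p + q)%N m + cent p q *: mono m.

Lemma stmtG r : valid r -> stmtIII r -> forall (p : nat) (s : int),
  rhoZ p (Zact s r) - rhoZ s (Zact p r) = gam p s *: Zact (p%:Z + s) r + cent p s *: mono r.
Proof.
move=> vr IH p [n|n]; first by rewrite IH PoszD.
have -> : Zact (Negz n) r = ins n.+1 r by [].
have -> : rhoZ (Negz n) (Zact p r) = insV n.+1 (Zact p r) by [].
by rewrite (IIC vr p (ltn0Sn n)) NegzE.
Qed.

Lemma III m : valid m -> stmtIII m.
Proof.
elim: m => [|y1 r IH] vm p q.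
  have hz : forall n : nat, Zact n [::] = (if n == 0%N then h0 else 0) *: mono [::] by [].
  rewrite !hz !rhoZZ !rhoZ_mono // !hz !scalerA mulrC subrr.
  case: (posnP (p + q)%N) => h.
    have /andP [/eqP hp /eqP hq] : (p == 0%N) && (q == 0%N) by rewrite -addn_eq0 h.
    subst p q.
    by rewrite (gam_nn K) (@cent00 K c0 l0) mul0r !scale0r addr0.
  rewrite cent0; last by rewrite -PoszD; lia.
  by rewrite mulr0 !scale0r addr0.
have vr := valid_tail vm; have y10 := valid_pos vm.
have G := stmtG vr (IH vr).
have hZ : forall n : nat, Zact n (y1 :: r) = insV y1 (Zact n r)
   + gam n (- y1%:Z) *: Zact (n%:Z - y1%:Z) r + cent n (- y1%:Z) *: mono r.
  by move=> n; rewrite -act_b_cons.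
rewrite !hZ !rhoZD !rhoZZ !IIV' // !Pn_valid; try exact: Zact_valid.
rewrite !rhoZ_mono //.
have G1 := G q (p%:Z - y1%:Z); move/eqP: G1; rewrite subr_eq => /eqP G1.
have G2 := G p (q%:Z - y1%:Z); move/eqP: G2; rewrite subr_eq => /eqP G2.
have G3 := IH vr p q; move/eqP: G3; rewrite subr_eq => /eqP G3.
rewrite G2 G1 G3.
have M1 : insV y1 (mono r) = mono (y1 :: r) by rewrite insV_mono // ins_le // (valid_lb vm).
rewrite !insVD !insVZ M1.
have e1 : q%:Z + (p%:Z - y1%:Z) = p%:Z + q%:Z - y1%:Z by ring.
have e2 : p%:Z + (q%:Z - y1%:Z) = p%:Z + q%:Z - y1%:Z by ring.
rewrite e1 e2 PoszD (@gamC K q (p%:Z - y1%:Z)) (centC c0 l0 q (p%:Z - y1%:Z)).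
have J := @jacA K p q (- y1%:Z).
have C := @cocA K c0 l0 p q (- y1%:Z).
apply: cfP => k; cfsimp.
close2 J C (cf k (Zact (p%:Z + q%:Z - y1%:Z) r)) (cf k (mono r)).
Qed.

Lemma rel_all (s t : int) X :
  rhoZ s (rhoZ t X) - rhoZ t (rhoZ s X) = gam s t *: rhoZ (s + t) X + cent s t *: Pn X.
Proof.
have PN : forall (p : nat) n, rhoZ p (rhoZ (Negz n) X) - rhoZ (Negz n) (rhoZ p X)
    = gam p (Negz n) *: rhoZ (p%:Z + Negz n) X + cent p (Negz n) *: Pn X.
  move=> p n; have -> : forall Y, rhoZ (Negz n) Y = insV n.+1 Y by [].
  rewrite IIV //; by rewrite NegzE.
case: s => [p|n]; case: t => [q|m].
- rewrite -PoszD /rhoZ /Pn !ext_comp -ext_FB -!ext_FZ -ext_FD; apply: ext_eq => k _.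
  exact: III (valid_nz k) p q.
- exact: PN.
- rewrite -opprB PN (@gamC K (Negz n)) (@centC K c0 l0 (Negz n)) [Negz n + _]addrC.
  apply: cfP => k; cfsimp; ring.
- have -> : forall j Y, rhoZ (Negz j) Y = insV j.+1 Y by [].
  rewrite insIV // cent0; last by rewrite !NegzE; lia.
  have -> : Negz n + Negz m = Negz (n + m).+1 by rewrite !NegzE; lia.
  by rewrite scale0r addr0 !NegzE addSn addnS.
Qed.

Lemma Pn_rhoZ s X : Pn (rhoZ s X) = rhoZ s X.
Proof.
apply: Pn_valid; apply: allv_ext => k _; exact: Zact_valid (valid_nz k).
Qed.
Lemma rhoZ_Pn s X : rhoZ s (Pn X) = rhoZ s X.
Proof.
rewrite /Pn /rhoZ ext_comp; apply: ext_eq => k _; by rewrite ext_mono nz_valid // valid_nz.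
Qed.
Lemma Pn_Pn X : Pn (Pn X) = Pn X.
Proof. apply: Pn_valid; apply: allv_ext => k _; apply: allv_mono; exact: valid_nz. Qed.
Lemma Pn_mono m : valid m -> Pn (mono m) = mono m.
Proof. by move=> vm; rewrite /Pn ext_mono nz_valid. Qed.

Lemma rhoZ_hw (s : int) : 0 < s -> rhoZ s (mono [::]) = 0.
Proof.
case: s => // n; rewrite ltz_nat => n0.
by rewrite rhoZ_mono //= eqn0Ngt n0 scale0r.
Qed.
Lemma rhoZ_hw0 : rhoZ 0 (mono [::]) = h0 *: mono [::].
Proof. by rewrite rhoZ_mono. Qed.

Definition rE : Drep E := @DRep K E (fun m => rhoZ (2 * m)) (fun j => rhoZ (2 * j + 1))
  (fun v => c0 *: Pn v) (fun v => l0 *: Pn v).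

Lemma ev2 (m : int) : ev (2 * m) = true.
Proof. rewrite /ev; lia. Qed.
Lemma ev21 (j : int) : ev (2 * j + 1) = false.
Proof. rewrite /ev; apply/negP; lia. Qed.

Lemma two_neq0 : (2%:R : K) != 0.
Proof. by rewrite pnatr_eq0. Qed.

Lemma rE_Dmod : is_Dmodule rE.
Proof.
split.
- by move=> m a u v /=; rewrite linearP.
- by move=> j a u v /=; rewrite linearP.
- by move=> a u v /=; rewrite linearP scalerDr !scalerA mulrC.
- by move=> a u v /=; rewrite linearP scalerDr !scalerA mulrC.
split; [split| | |].
- move=> m n v /=; rewrite rel_all -mulrDr.
  congr (_ *: _ + _).
    rewrite /gam !ev2 -mulrBr rmorphM /=; field; by [].
  rewrite /cent -mulrDr.
  have -> : (2 * (m + n) == 0) = (m + n == 0) by apply/idP/idP => /eqP h; apply/eqP; lia.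
  case: ifP => _; last by rewrite scale0r.
  rewrite ev2 scalerA; congr (_ *: _); rewrite rmorphM /= rmorphB rmorphXn /=; field; by [].
- move=> m j v /=; rewrite rel_all cent0; last by apply/eqP; lia.
  rewrite scale0r addr0 /gam ev2 ev21.
  have -> : 2 * m + (2 * j + 1) = 2 * (m + j) + 1 by ring.
  congr (_ *: _); rewrite sub0r rmorphN /=; field; by [].
- move=> i j v /=; rewrite rel_all.
  rewrite /gam !ev21 subrr mul0r scale0r add0r /cent.
  have -> : (2 * i + 1 + (2 * j + 1) == 0) = (i + j + 1 == 0) by apply/idP/idP => /eqP h; apply/eqP; lia.
  case: ifP => _; last by rewrite scale0r.
  by rewrite ev21 scalerA.
- move=> m v /=; split.
    by rewrite Pn_rhoZ linearZ /= rhoZ_Pn.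
  by rewrite Pn_rhoZ linearZ /= rhoZ_Pn.
- move=> j v /=; split.
    by rewrite Pn_rhoZ linearZ /= rhoZ_Pn.
  by rewrite Pn_rhoZ linearZ /= rhoZ_Pn.
- move=> v /=; by rewrite !linearZ /= !Pn_Pn !scalerA mulrC.
Qed.

Lemma rE_hw : is_hw c0 h0 l0 rE (mono [::]).
Proof.
split => /=.
- by rewrite mulr0 rhoZ_hw0.
- by rewrite Pn_mono.
- by rewrite Pn_mono.
- move=> m m0; apply: rhoZ_hw; lia.
- move=> j j0; apply: rhoZ_hw; lia.
Qed.

Variables alpha beta gamma : K.
Local Notation aZ := (aZ alpha beta gamma).
Definition TZ (s : int) (f : int -> E) : int -> E :=
  fun n => rhoZ s (f n) + aZ s (n - s) *: f (n - s).

Lemma tD_TZ m f : tD alpha beta rE m f = TZ (2 * m) f.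
Proof.
apply: functional_extensionality => n; rewrite /tD /TZ /=; congr (_ + _ *: _).
rewrite /aZ ev2 rmorphM /=; field; by [].
Qed.
Lemma tH_TZ j f : tH gamma rE j f = TZ (2 * j + 1) f.
Proof.
apply: functional_extensionality => n; rewrite /tH /TZ /=; congr (_ + _ *: _).
by rewrite /aZ ev21.
Qed.

Ltac close1 J u := apply/eqP; rewrite -subr_eq0; apply/eqP;
  match type of J with ?A = 0 => first
    [ transitivity (A * u); [ring | by rewrite J mul0r]
    | transitivity (- (A * u)); [ring | by rewrite J mul0r oppr0] ] end.

Lemma TZrel s t f n :
  TZ s (TZ t f) n - TZ t (TZ s f) n = gam s t *: TZ (s + t) f n + cent s t *: Pn (f n).
Proof.
rewrite /TZ !rhoZD !rhoZZ.
have R := rel_all s t (f n); move/eqP: R; rewrite subr_eq => /eqP ->.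
have A := aZ_rel alpha beta gamma s t (n - s - t).
have e1 : n - s - t + t = n - s by ring.
have e2 : n - s - t + s = n - t by ring.
rewrite e1 e2 in A; move/eqP: A; rewrite -subr_eq0 => /eqP A.
have e3 : n - t - s = n - s - t by ring.
have e4 : n - (s + t) = n - s - t by ring.
rewrite e3 e4.
apply: cfP => k; cfsimp.
close1 A (cf k (f (n - s - t))).
Qed.

Variable kk : int.
Local Notation w := (mono [::]).

Inductive Sg : (int -> E) -> Prop :=
 | Sg_base n' : kk + 1 <= n' -> Sg (tvec w n')
 | Sg_zero : Sg (fun _ => 0)
 | Sg_lin a f g : Sg f -> Sg g -> Sg (fun n => a *: f n + g n)
 | Sg_neg s f : s < 0 -> Sg f -> Sg (TZ s f).

Lemma Sg_ext f g : Sg f -> (forall n, f n = g n) -> Sg g.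
Proof. by move=> h e; have <- : f = g by apply: functional_extensionality. Qed.

Lemma rhoZ0 s : rhoZ s 0 = 0. Proof. exact: linear0. Qed.
Lemma Pn0 : Pn 0 = 0. Proof. exact: linear0. Qed.

Lemma Sg_closed f : Sg f -> (forall s, Sg (TZ s f)) /\ Sg (fun n => Pn (f n)).
Proof.
elim => {f}.
- move=> n' hn; split.
    case=> [p|j]; last by apply: Sg_neg => //; apply: Sg_base.
    pose lam : K := if p == 0%N then h0 else 0.
    apply: (@Sg_ext (fun n => lam *: tvec w n' n + (aZ p%:Z n' *: tvec w (n' + p%:Z) n + 0))).
      apply: Sg_lin; first exact: Sg_base.
      apply: Sg_lin; [apply: Sg_base; lia | exact: Sg_zero].
    move=> n; rewrite /TZ /tvec addr0.
    have -> : (n - p%:Z == n') = (n == n' + p%:Z) by apply/idP/idP => /eqP h; apply/eqP; lia.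
    have rw : rhoZ p w = lam *: w by rewrite rhoZ_mono.
    case: (n == n'); rewrite ?rw ?rhoZ0 ?scaler0 ?add0r;
      (case: eqP => [e|_]; [by rewrite e addrK | by rewrite !scaler0 ?addr0]).
  apply: (Sg_ext (Sg_base hn)) => n; rewrite /tvec; case: eqP => _; [by rewrite Pn_mono | by rewrite Pn0].
- split; first by move=> s; apply: (Sg_ext Sg_zero) => n; rewrite /TZ rhoZ0 scaler0 addr0.
  by apply: (Sg_ext Sg_zero) => n; rewrite Pn0.
- move=> a f g _ [IHf PTf] _ [IHg PTg]; split.
    move=> s; apply: (Sg_ext (Sg_lin a (IHf s) (IHg s))) => n.
    rewrite /TZ rhoZD rhoZZ; apply: cfP => k; cfsimp; ring.
  apply: (Sg_ext (Sg_lin a PTf PTg)) => n; by rewrite linearP.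
- move=> t f tneg _ [IH PT]; split.
    move=> s; apply: (Sg_ext (Sg_lin 1 (Sg_neg tneg (IH s))
        (Sg_lin (gam s t) (IH (s + t)) (Sg_lin (cent s t) PT Sg_zero)))) => n.
    have R := TZrel s t f n; move/eqP: R; rewrite subr_eq => /eqP ->.
    by rewrite scale1r addr0 addrC.
  apply: (Sg_ext (Sg_neg tneg PT)) => n.
  by rewrite /TZ linearD linearZ /= Pn_rhoZ rhoZ_Pn.
Qed.

Lemma TZ_fsupp s f : fsupp f -> fsupp (TZ s f).
Proof.
case=> L hL; exists (L ++ [seq n + s | n <- L]) => n; rewrite mem_cat negb_or => /andP [h1 h2].
rewrite /TZ hL // rhoZ0 add0r hL ?scaler0 //.
apply: contra h2 => h; apply/mapP; exists (n - s) => //; ring.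
Qed.

Lemma Sg_fsupp f : Sg f -> fsupp f.
Proof.
elim => {f}.
- move=> n' _; exists [:: n'] => n; rewrite inE /tvec => /negbTE -> //.
- by exists [::].
- move=> a f g _ [Lf hf] _ [Lg hg]; exists (Lf ++ Lg) => n; rewrite mem_cat negb_or => /andP [h1 h2].
  by rewrite hf // hg // scaler0 addr0.
- by move=> s f _ _ h; apply: TZ_fsupp.
Qed.

Definition sc (G : seq nat -> K) (e : E) : K := cf [::] (ext (fun m => G m *: mono [::]) e).
Lemma sc_lin G a u v : sc G (a *: u + v) = a * sc G u + sc G v.
Proof. by rewrite /sc linearP /= cfD cfZ. Qed.
Lemma scD G u v : sc G (u + v) = sc G u + sc G v.
Proof. by rewrite /sc linearD cfD. Qed.
Lemma scZ G a u : sc G (a *: u) = a * sc G u.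
Proof. by rewrite /sc linearZ cfZ. Qed.
Lemma sc_mono G m : sc G (mono m) = G m.
Proof. by rewrite /sc ext_mono cfZ cf_mono eqxx mulr1. Qed.
Lemma sc0 G : sc G 0 = 0.
Proof. by rewrite /sc linear0 cf0. Qed.
Lemma ext_scal (c : seq nat -> K) Y :
  ext (fun m => c m *: mono [::]) Y = cf [::] (ext (fun m => c m *: mono [::]) Y) *: mono [::].
Proof.
apply: cfP => k; rewrite cfZ cf_mono.
case: (eqVneq k [::]) => [->|hk]; first by rewrite mulr1.
rewrite mulr0; apply/eqP; apply: contraT => /cf_ext_supp [m _].
by rewrite cfZ cf_mono (negbTE hk) mulr0 eqxx.
Qed.
Lemma sc_ext G F X : sc G (ext F X) = sc (fun k => sc G (F k)) X.
Proof.
rewrite /sc ext_comp; congr (cf _ _); apply: ext_eq => k _; exact: ext_scal.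
Qed.
Lemma sc_eq G1 G2 X : (forall k, cf k X != 0 -> G1 k = G2 k) -> sc G1 X = sc G2 X.
Proof. by move=> h; rewrite /sc; congr (cf _ _); apply: ext_eq => k /h ->. Qed.
Lemma sc_scale (c : K) G X : sc (fun k => c * G k) X = c * sc G X.
Proof. by rewrite /sc -cfZ -ext_FZ; congr (cf _ _); apply: ext_eq => k _; rewrite scalerA. Qed.

Fixpoint Ls (m : seq nat) : K :=
  match m with [::] => 1 | y1 :: r => - aZ (- y1%:Z) (kk + (sumn r)%:Z + y1%:Z) * Ls r end.
Definition phi (n : int) (m : seq nat) : K := if kk + (sumn m)%:Z == n then Ls m else 0.
Definition Phi (n : int) (e : E) : K := sc (fun m => phi n (nz m)) e.

Lemma phi_cons n y1 k : phi n (y1 :: k) = - aZ (- y1%:Z) n * phi (n - y1%:Z) k.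
Proof.
rewrite /phi /=.
have -> : (kk + (y1 + sumn k)%N%:Z == n) = (kk + (sumn k)%:Z == n - y1%:Z).
  by apply/idP/idP => /eqP h; apply/eqP; lia.
case: eqP => [h|]; last by rewrite mulr0.
have -> : kk + (sumn k)%:Z + y1%:Z = n by rewrite h; ring.
by [].
Qed.

Lemma Phi_mono n m : valid m -> Phi n (mono m) = phi n m.
Proof. by move=> vm; rewrite /Phi sc_mono nz_valid. Qed.

Lemma Phi_ins m : valid m -> forall y n, (0 < y)%N ->
  Phi n (ins y m) = - aZ (- y%:Z) n * phi (n - y%:Z) m.
Proof.
elim: m => [|y1 r IH] vm y n y0.
  by rewrite Phi_mono ?phi_cons // valid_cons y0.
have vr := valid_tail vm; have lbr := valid_lb vm; have y10 := valid_pos vm.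
case: (leqP y y1) => hy.
  have lby : lb y (y1 :: r) by rewrite lb_cons hy (lb_trans hy lbr).
  rewrite ins_le //.
  by rewrite Phi_mono ?phi_cons // valid_cons y0 lby vm.
have hvX : allv (fun k => valid (y1 :: k)) (ins y r).
  apply: allv_imp (ins_LB vr y0 (ltnW hy) lbr).
  by move=> k /andP [vk lk]; rewrite valid_cons y10 lk vk.
have HC : Phi n (CONS y1 (ins y r)) = - aZ (- y1%:Z) n * Phi (n - y1%:Z) (ins y r).
  rewrite /Phi /CONS sc_ext -sc_scale; apply: sc_eq => k hk.
  rewrite sc_mono nz_valid ?hvX // phi_cons nz_valid //.
  exact: valid_tail (hvX k hk).
rewrite ins_gt // /Phi scD scZ -/(Phi n _) -/(Phi n _) HC !IH //; last by rewrite addn_gt0 y0.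
rewrite phi_cons.
have A := aZ_rel alpha beta gamma (- y1%:Z) (- y%:Z) n.
move/eqP: A; rewrite -subr_eq0 => /eqP A.
rewrite (@gamC K (- y1%:Z)) in A.
have e1 : n - y1%:Z - y%:Z = n - y%:Z - y1%:Z by ring.
have e2 : n - (y + y1)%N%:Z = n - y%:Z - y1%:Z by rewrite PoszD; ring.
have e3 : - (y + y1)%N%:Z = - y1%:Z + - y%:Z by rewrite PoszD; ring.
rewrite e1 e2 e3.
close1 A (phi (n - y%:Z - y1%:Z) r).
Qed.

Lemma Phi_insV n y e : (0 < y)%N -> Phi n (insV y e) = - aZ (- y%:Z) n * Phi (n - y%:Z) e.
Proof.
move=> y0; rewrite /Phi /insV sc_ext -sc_scale; apply: sc_eq => k _.
exact: Phi_ins (valid_nz k) y n y0.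
Qed.

Definition Vanish (f : int -> E) := forall L, uniq L -> (forall n, n \notin L -> f n = 0) ->
  \sum_(n <- L) Phi n (f n) = 0.

Lemma Phi0 n : Phi n 0 = 0. Proof. exact: sc0. Qed.
Lemma PhiD n u v : Phi n (u + v) = Phi n u + Phi n v. Proof. exact: scD. Qed.
Lemma PhiZ n a u : Phi n (a *: u) = a * Phi n u. Proof. exact: scZ. Qed.

Lemma Vanish_TZneg s f : s < 0 -> fsupp f -> Vanish (TZ s f).
Proof.
case: s => // j _ [Lf hf] L uL hL.
set Lu := undup Lf.
have hu : forall n, n \notin Lu -> f n = 0 by move=> n; rewrite mem_undup; exact: hf.
set L2 := undup (Lf ++ [seq n + Negz j | n <- Lf]).
have hF : forall n, n \notin L2 -> Phi n (TZ (Negz j) f n) = 0.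
  move=> n; rewrite mem_undup mem_cat negb_or => /andP [n1 n2].
  rewrite /TZ hf // rhoZ0 add0r hf ?scaler0 ?Phi0 //.
  apply: contra n2 => h; apply/mapP; exists (n - Negz j) => //; ring.
rewrite (@sum_indep _ _ L L2) ?undup_uniq //; last first.
  by move=> n /hL; rewrite /TZ => ->; rewrite Phi0.
have split : forall n, Phi n (TZ (Negz j) f n)
   = - aZ (Negz j) n * Phi (n + Negz j) (f n) + aZ (Negz j) (n - Negz j) * Phi n (f (n - Negz j)).
  move=> n; rewrite /TZ PhiD PhiZ.
  have -> : rhoZ (Negz j) (f n) = insV j.+1 (f n) by [].
  by rewrite Phi_insV // NegzE.
under eq_bigr do rewrite split.
rewrite big_split /=.
rewrite (@sum_indep _ _ L2 Lu) ?undup_uniq //; first last.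
- by move=> n /hu ->; rewrite Phi0 mulr0.
- move=> n; rewrite mem_undup mem_cat negb_or => /andP [n1 _]; by rewrite hf // Phi0 mulr0.
rewrite (@sum_indep _ (fun n => aZ (Negz j) (n - Negz j) * Phi n (f (n - Negz j))) L2
   [seq n + Negz j | n <- Lu]) ?undup_uniq //; first last.
- move=> n hn; rewrite hu ?Phi0 ?mulr0 //; apply: contra hn => h.
  apply/mapP; exists (n - Negz j) => //; ring.
- move=> n; rewrite mem_undup mem_cat negb_or => /andP [_ n2].
  rewrite hf ?Phi0 ?mulr0 //; apply: contra n2 => h; apply/mapP; exists (n - Negz j) => //; ring.
- rewrite map_inj_uniq ?undup_uniq // => a b /eqP; rewrite -subr_eq0 => /eqP h; apply/eqP.
  by rewrite -subr_eq0; apply/eqP; rewrite -h; ring.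
rewrite big_map -big_split /= big1 // => n _.
have -> : n + Negz j - Negz j = n by ring.
ring.
Qed.

Lemma Sg_vanish f : Sg f -> Vanish f.
Proof.
elim => {f}.
- move=> n' hn L _ _; rewrite big1 // => n _; rewrite /tvec.
  case: eqP => [->|_]; last exact: Phi0.
  rewrite Phi_mono // /phi /= addr0; case: eqP => // h; exfalso; lia.
- by move=> L _ _; rewrite big1 // => n _; exact: Phi0.
- move=> a f g Sf IHf Sg' IHg L uL hL.
  have [Lf hf] := Sg_fsupp Sf; have [Lg hg] := Sg_fsupp Sg'.
  set L3 := undup (L ++ Lf ++ Lg).
  rewrite (@sum_indep _ _ L L3) ?undup_uniq //; first last.
  + move=> n; rewrite mem_undup !mem_cat !negb_or => /and3P [_ n2 n3].
    by rewrite hf // hg // scaler0 addr0 Phi0.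
  + by move=> n /hL ->; rewrite Phi0.
  under eq_bigr do rewrite PhiD PhiZ.
  rewrite big_split /= -mulr_sumr.
  rewrite IHf ?IHg ?undup_uniq ?mulr0 ?addr0 //.
  + move=> n; rewrite mem_undup !mem_cat !negb_or => /and3P [_ _ n3]; exact: hg.
  + move=> n; rewrite mem_undup !mem_cat !negb_or => /and3P [_ n2 _]; exact: hf.
- move=> s f sneg Sf _; apply: Vanish_TZneg => //; exact: Sg_fsupp.
Qed.

Lemma Sg_excl : ~ Sg (tvec w kk).
Proof.
move=> /Sg_vanish /(_ [:: kk] isT).
have h : forall n, n \notin [:: kk] -> tvec w kk n = 0.
  by move=> n; rewrite inE /tvec => /negbTE ->.
move=> /(_ h); rewrite big_seq1 /tvec eqxx Phi_mono // /phi /= addr0 eqxx.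
by move/eqP; rewrite oner_eq0.
Qed.

Lemma lin0 (M N : lmodType K) (f : M -> N) : is_lin f -> f 0 = 0.
Proof.
move=> h; have := h (-1) 0 0; rewrite scaleN1r oppr0 addr0 => ->.
by rewrite scaleN1r addNr.
Qed.
Lemma linD (M N : lmodType K) (f : M -> N) : is_lin f -> forall u v, f (u + v) = f u + f v.
Proof. by move=> h u v; have := h 1 u v; rewrite !scale1r. Qed.
Lemma linZ (M N : lmodType K) (f : M -> N) : is_lin f -> forall a u, f (a *: u) = a *: f u.
Proof.
move=> h a u; have := h a u 0; rewrite !addr0 => ->.
have := h (-1) 0 0; rewrite scaleN1r oppr0 addr0 => ->; by rewrite scaleN1r addNr addr0.
Qed.

Lemma fsupp_gen (M : lmodType K) (g : M -> M) (c : int -> K) (s : int) (f : int -> M) :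
  g 0 = 0 -> fsupp f -> fsupp (fun n => g (f n) + c n *: f (n - s)).
Proof.
move=> g0 [L hL]; exists (L ++ [seq n + s | n <- L]) => n; rewrite mem_cat negb_or => /andP [h1 h2].
rewrite hL // g0 add0r hL ?scaler0 //.
apply: contra h2 => h; apply/mapP; exists (n - s) => //; ring.
Qed.

Lemma main_S (M : lmodType K) (rho : Drep M) (one : M) :
  is_Verma c0 h0 l0 rho one ->
  exists S, [/\ tsubmod alpha beta gamma rho S, S (tvec one (kk + 1)) & ~ S (tvec one kk)].
Proof.
case=> Dm _ univ.
have [F [[[Flin Fd Fh Fc Fl] F1] _]] := univ E rE (mono [::]) rE_Dmod rE_hw.
case: Dm => dlin hlin clin llin _.
have F0 : F 0 = 0 := lin0 Flin.
pose S := fun f : int -> M => fsupp f /\ Sg (fun n => F (f n)).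
exists S; split.
- split; split.
  + by move=> f [].
  + split; first by exists [::].
    by apply: (Sg_ext Sg_zero) => n; rewrite F0.
  + move=> a f g [[Lf hf] Sf] [[Lg hg] Sg']; split.
      exists (Lf ++ Lg) => n; rewrite mem_cat negb_or => /andP [h1 h2].
      by rewrite hf // hg // scaler0 addr0.
    by apply: (Sg_ext (Sg_lin a Sf Sg')) => n; rewrite Flin.
  + move=> m f [hf Sf]; split; first exact: fsupp_gen (lin0 (dlin m)) hf.
    have [IH _] := Sg_closed Sf.
    apply: (Sg_ext (IH (2 * m))) => n; rewrite -tD_TZ /tD.
    by rewrite (linD Flin) (linZ Flin) Fd.
  + move=> j f [hf Sf]; split; first exact: fsupp_gen (lin0 (hlin j)) hf.
    have [IH _] := Sg_closed Sf.
    apply: (Sg_ext (IH (2 * j + 1))) => n; rewrite -tH_TZ /tH.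
    by rewrite (linD Flin) (linZ Flin) Fh.
  + move=> f [hf Sf]; have [_ PT] := Sg_closed Sf; split; split.
    * case: hf => L hL; exists L => n nL; rewrite /tC hL //; exact: lin0 clin.
    * apply: (Sg_ext (Sg_lin c0 PT Sg_zero)) => n; by rewrite /tC Fc addr0.
    * case: hf => L hL; exists L => n nL; rewrite /tL hL //; exact: lin0 llin.
    * apply: (Sg_ext (Sg_lin l0 PT Sg_zero)) => n; by rewrite /tL Fl addr0.
- split; first by exists [:: kk + 1] => n; rewrite inE /tvec => /negbTE ->.
  apply: (Sg_ext (Sg_base (lexx _))) => n; rewrite /tvec; case: eqP => _ //.
- move=> [_ hS]; apply: Sg_excl; apply: (Sg_ext hS) => n; rewrite /tvec; case: eqP => _ //.
Qed.
End Abstract.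

Section Conc.
Variable K : numFieldType.
Local Notation E := {malg K[seq nat]}.
Definition cmono (m : seq nat) : E := << m >>.
Definition cext (F : seq nat -> E) (e : E) : E := \sum_(k <- msupp e) e@_k *: F k.
Definition ccf (k : seq nat) (x : E) : K := x@_k.

Lemma cmsuppZD_le (a : K) (u v : E) : (msupp (a *: u + v) `<=` msupp u `|` msupp v)%fset.
Proof.
apply: fsubset_trans (msuppD_le _ _) _.
have h := @msuppZ_le (seq nat) K a u.
exact: (fsetSU _ h).
Qed.
Lemma cextEw F (d : {fset (seq nat)}) e : (msupp e `<=` d)%fset ->
  cext F e = \sum_(k <- d) e@_k *: F k.
Proof.
move=> le; rewrite /cext (big_fset_incl _ le) //= => x xd /mcoeff_outdom ->.
by rewrite scale0r.
Qed.
Lemma cext_lin F : linear (cext F).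
Proof.
move=> a u v /=.
rewrite (@cextEw F (msupp u `|` msupp v)%fset (a *: u + v)); last exact: cmsuppZD_le.
rewrite (@cextEw F (msupp u `|` msupp v)%fset u) ?fsubsetUl //.
rewrite (@cextEw F (msupp u `|` msupp v)%fset v) ?fsubsetUr //.
rewrite scaler_sumr -big_split /=; apply: eq_bigr => k _.
by rewrite mcoeffD mcoeffZ scalerDl scalerA.
Qed.
HB.instance Definition _ F := GRing.isLinear.Build K E E *:%R (cext F) (cext_lin F).
Lemma cext_mono F k : cext F (cmono k) = F k.
Proof.
by rewrite /cmono (@cextEw F [fset k]%fset) ?msuppU_le // big_seq_fset1 mcoeffUU scale1r.
Qed.
Lemma cext_eq F G X : (forall k, ccf k X != 0 -> F k = G k) -> cext F X = cext G X.
Proof.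
move=> H; rewrite /cext; apply: eq_big_seq => k hk; rewrite H //.
by rewrite /ccf mcoeff_neq0.
Qed.
Lemma cext_FD F G X : cext (fun k => F k + G k) X = cext F X + cext G X.
Proof. by rewrite /cext -big_split; apply: eq_bigr => k _; rewrite scalerDr. Qed.
Lemma cext_FZ a F X : cext (fun k => a *: F k) X = a *: cext F X.
Proof. by rewrite /cext scaler_sumr; apply: eq_bigr => k _; rewrite !scalerA mulrC. Qed.
Lemma cext_comp F G X : cext G (cext F X) = cext (fun k => cext G (F k)) X.
Proof. rewrite [cext F X]/cext linear_sum; apply: eq_bigr => k _; by rewrite linearZ. Qed.
Lemma cmono_scale (a : K) k : << a *g k >> = a *: (cmono k).
Proof. apply/malgP => k'; by rewrite mcoeffZ !mcoeffU mulr_natr. Qed.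
Lemma cext_id X : cext cmono X = X.
Proof. rewrite [RHS]monalgE /cext; apply: eq_bigr => k _; by rewrite cmono_scale. Qed.
Lemma ccf_lin k : linear (ccf k : E -> K^o).
Proof. by move=> a u v; rewrite /ccf mcoeffD mcoeffZ. Qed.
Lemma ccf_mono k m : ccf k (cmono m) = (k == m)%:R.
Proof. by rewrite /ccf /cmono mcoeffU eq_sym. Qed.
Lemma ccfP x y : (forall k, ccf k x = ccf k y) -> x = y.
Proof. by move=> h; apply/malgP. Qed.
Lemma ccf_ext_supp F X k : ccf k (cext F X) != 0 ->
  exists2 m, ccf m X != 0 & ccf k (F m) != 0.
Proof.
rewrite /ccf /cext raddf_sum /=.
case: (boolP (has (fun m => (X@_m != 0) && ((F m)@_k != 0)) (msupp X))).
  by move=> /hasP [m _ /andP [h1 h2]] _; exists m.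
move=> /hasPn h; rewrite big1_seq ?eqxx // => m /h; rewrite negb_and !negbK mcoeffZ.
by case/orP => /eqP ->; rewrite ?mul0r ?mulr0.
Qed.
End Conc.

Theorem lemma3p4 (R : realType) (c h alpha beta l gamma : R[i])
  (M : lmodType R[i]) (rho : Drep M) (one : M) :
  l != 0 -> gamma != 0 -> is_Verma c h l rho one ->
  (forall k : int,
     ~ in_gen alpha beta gamma rho (tvec one (k + 1)) (tvec one k)) /\
  ~ t_irreducible alpha beta gamma rho.
Proof.
move=> _ _ hV.
have MS := @main_S R[i] _ (@cmono R[i]) (@cext R[i]) (@ccf R[i])
  (@cext_lin R[i]) (@cext_mono R[i]) (@cext_eq R[i]) (@cext_FD R[i]) (@cext_FZ R[i])
  (@cext_comp R[i]) (@cext_id R[i]) (@ccf_lin R[i]) (@ccf_mono R[i]) (@ccfP R[i])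
  (@ccf_ext_supp R[i]) c h l alpha beta gamma.
split.
  move=> k hin; have [S [hS h1 h2]] := MS k M rho one hV.
  exact: h2 (hin S hS h1).
move=> [_ irr]; have [S [hS h1 h2]] := MS 0 M rho one hV.
case: (irr S hS) => [hz | hall].
  have one0 : one = 0 by have := hz _ h1 1; rewrite /tvec add0r eqxx.
  apply: h2; have -> : tvec one 0 = (fun _ => 0).
    by apply: functional_extensionality => n; rewrite /tvec one0; case: ifP.
  by case: hS => [[_ z _] _].
apply: h2; apply: hall; exists [:: 0] => n; rewrite inE /tvec => /negbTE -> //.
Qed.
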